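(* In the Call-by-Value probabilistic $\lambda$-calculus (as defined in the context), for every multi-distribution $\mathbf m$, the set $\mathrm{Lim}_{\mathrm{obs}_{\mathrm{Nnf}}}(\mathbf m,\Rrightarrow_E)$ contains exactly one element.
   Context: Terms $\Lambda_\oplus$: $M::=x\mid\lambda x.M\mid MM\mid M\oplus M$; values $V::=x\mid\lambda x.M$. Contexts $C::=[\,]\mid MC\mid CM\mid\lambda x.C\mid C\oplus M\mid M\oplus C$; weak contexts $W::=[\,]\mid WM\mid MW$. A multi-distribution is a finite multiset $[p_iM_i]_{i\in I}$ with $p_i\in(0,1]$, $\sum_ip_i\le1$; $+$ is multiset union, $q\cdot[p_iM_i]_i=[(qp_i)M_i]_i$, $[M]:=[1M]$. $C[(\lambda x.M)V]\to_{\beta_v}[C[M\{V/x\}]]$; $W[M\oplus N]\to_\oplus[\tfrac12W[M],\tfrac12W[N]]$; $\to:=\to_{\beta_v}\cup\to_\oplus$; surface reduction $\to_s$ is $\to_\oplus$ together with the closure of $\beta_v$ under weak contexts. $M$ is $\to$-normal (surface-normal) if no $\mathbf m$ with $M\to\mathbf m$ ($M\to_s\mathbf m$); $\mathrm{Nnf}$ is the set of $\to$-normal terms. Let $\rightsquigarrow_U$ be the unbiased iteration of weak $\beta_v$-reduction on $\Lambda_\oplus$: if $M\to_wM'$ (closure of $\beta_v$ under weak contexts) then $M\rightsquigarrow_UM'$; if $M$ is $\to_w$-normal: $\lambda x.P\rightsquigarrow_U\lambda x.P'$, $PQ\rightsquigarrow_UP'Q$, $PQ\rightsquigarrow_UPQ'$,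 $P\oplus Q\rightsquigarrow_UP'\oplus Q$, $P\oplus Q\rightsquigarrow_UP\oplus Q'$ whenever $P\rightsquigarrow_UP'$, resp. $Q\rightsquigarrow_UQ'$. $\rightsquigarrow_E$: if $M$ is not surface-normal and $M\to_s\mathbf m$ then $M\rightsquigarrow_E\mathbf m$; if $M$ is surface-normal and $M\rightsquigarrow_UM'$ then $M\rightsquigarrow_E[M']$. Full lifting $\Rrightarrow_E$: least relation with $[M]\Rrightarrow_E[M]$ if $M$ is $\to$-normal; $[M]\Rrightarrow_E\mathbf m$ if $M\rightsquigarrow_E\mathbf m$; $[p_iM_i]_{i\in I}\Rrightarrow_E\sum_ip_i\cdot\mathbf m_i$ if $[M_i]\Rrightarrow_E\mathbf m_i$ for all $i$. $\mathrm{obs}_{\mathrm{Nnf}}([p_iM_i]_{i\in I})$ is the subdistribution $\mu$ on $\mathrm{Nnf}$ with $\mu(N)=\sum_{i:\,M_i=N}p_i$, ordered pointwise. $\mathrm{Lim}_{\mathrm{obs}_{\mathrm{Nnf}}}(\mathbf m,R)$ is the set of all $\sup_n\mathrm{obs}_{\mathrm{Nnf}}(\mathbf m_n)$ over maximal $R$-sequences $(\mathbf m_n)_n$ from $\mathbf m$ (infinite, or finite ending in an $R$-normal element and then continued constantly). *)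

(* Defs.v *)
From Stdlib Require Import Reals Lra Arith List ClassicalDescription.
Import ListNotations.
Open Scope R_scope.

(* Terms of Lambda_oplus, in de Bruijn notation (terms up to alpha-equivalence). *)
Inductive term : Type :=
| Var : nat -> term
| Lam : term -> term
| App : term -> term -> term
| Choice : term -> term -> term.

Definition term_eq_dec (M N : term) : {M = N} + {M <> N}.
Proof. decide equality; apply Nat.eq_dec. Defined.

Definition is_value (V : term) : Prop :=
  match V with Var _ | Lam _ => True | _ => False end.

Fixpoint lift (c : nat) (t : term) : term :=
  match t with
  | Var n => if Nat.ltb n c then Var n else Var (S n)
  | Lam b => Lam (lift (S c) b)
  | App a b => App (lift c a) (lift c b)
  | Choice a b => Choice (lift c a) (lift c b)
  end.

(* subst k v t : substitute v for index k in t (removing binder k). *)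
Fixpoint subst (k : nat) (v : term) (t : term) : term :=
  match t with
  | Var n => if Nat.eqb n k then v
             else if Nat.ltb k n then Var (Nat.pred n) else Var n
  | Lam b => Lam (subst (S k) (lift 0 v) b)
  | App a b => App (subst k v a) (subst k v b)
  | Choice a b => Choice (subst k v a) (subst k v b)
  end.

(* Multi-distributions: finite multisets [p_i M_i], represented as lists. *)
Definition mdist := list (R * term).

Definition valid_mdist (m : mdist) : Prop :=
  (forall pM, In pM m -> 0 < fst pM <= 1) /\
  fold_right (fun pM acc => fst pM + acc) 0 m <= 1.

Definition unit_md (M : term) : mdist := [(1, M)].

Definition scale (q : R) (m : mdist) : mdist :=
  map (fun pM => (q * fst pM, snd pM)) m.

Inductive beta_full : term -> term -> Prop :=
| bf_redex M V : is_value V -> beta_full (App (Lam M) V) (subst 0 V M)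
| bf_appl M M' N : beta_full M M' -> beta_full (App M N) (App M' N)
| bf_appr M N N' : beta_full N N' -> beta_full (App M N) (App M N')
| bf_lam M M' : beta_full M M' -> beta_full (Lam M) (Lam M')
| bf_chl M M' N : beta_full M M' -> beta_full (Choice M N) (Choice M' N)
| bf_chr M N N' : beta_full N N' -> beta_full (Choice M N) (Choice M N').

Inductive beta_weak : term -> term -> Prop :=
| bw_redex M V : is_value V -> beta_weak (App (Lam M) V) (subst 0 V M)
| bw_appl M M' N : beta_weak M M' -> beta_weak (App M N) (App M' N)
| bw_appr M N N' : beta_weak N N' -> beta_weak (App M N) (App M N').

(* oplus_step T L R : T = W[M (+) N], L = W[M], R = W[N] *)
Inductive oplus_step : term -> term -> term -> Prop :=
| os_redex M N : oplus_step (Choice M N) M N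
| os_appl T L R N : oplus_step T L R -> oplus_step (App T N) (App L N) (App R N)
| os_appr M T L R : oplus_step T L R -> oplus_step (App M T) (App M L) (App M R).

Definition oplus_md (L R : term) : mdist := [(1/2, L); (1/2, R)].

Inductive step : term -> mdist -> Prop :=
| st_beta M M' : beta_full M M' -> step M (unit_md M')
| st_oplus M L R : oplus_step M L R -> step M (oplus_md L R).

Inductive sstep : term -> mdist -> Prop :=
| ss_beta M M' : beta_weak M M' -> sstep M (unit_md M')
| ss_oplus M L R : oplus_step M L R -> sstep M (oplus_md L R).

Definition normal (M : term) : Prop := ~ exists m, step M m.
Definition surface_normal (M : term) : Prop := ~ exists m, sstep M m.
Definition weak_normal (M : term) : Prop := ~ exists M', beta_weak M M'.

Inductive stepU : term -> term -> Prop :=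
| su_weak M M' : beta_weak M M' -> stepU M M'
| su_lam P P' : weak_normal (Lam P) -> stepU P P' -> stepU (Lam P) (Lam P')
| su_appl P P' Q : weak_normal (App P Q) -> stepU P P' -> stepU (App P Q) (App P' Q)
| su_appr P Q Q' : weak_normal (App P Q) -> stepU Q Q' -> stepU (App P Q) (App P Q')
| su_chl P P' Q : weak_normal (Choice P Q) -> stepU P P' -> stepU (Choice P Q) (Choice P' Q)
| su_chr P Q Q' : weak_normal (Choice P Q) -> stepU Q Q' -> stepU (Choice P Q) (Choice P Q').

Inductive stepE : term -> mdist -> Prop :=
| se_surf M m : ~ surface_normal M -> sstep M m -> stepE M m
| se_U M M' : surface_normal M -> stepU M M' -> stepE M (unit_md M').

Inductive fullE : mdist -> mdist -> Prop :=
| fe_normal M : normal M -> fullE (unit_md M) (unit_md M)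
| fe_step M m : stepE M m -> fullE (unit_md M) m
| fe_lift (l : mdist) (ms : list mdist) :
    length ms = length l ->
    (forall i, (i < length l)%nat ->
       fullE (unit_md (snd (nth i l (0, Var 0)))) (nth i ms [])) ->
    fullE l (concat (map (fun pm => scale (fst (fst pm)) (snd pm)) (combine l ms))).

Definition obs (m : mdist) (N : term) : R :=
  if excluded_middle_informative (normal N) then
    fold_right (fun pM acc => (if term_eq_dec (snd pM) N then fst pM else 0) + acc) 0 m
  else 0.

Definition rel_normal (Rel : mdist -> mdist -> Prop) (m : mdist) : Prop :=
  ~ exists m', Rel m m'.

(* maximal Rel-sequence from m: infinite, or reaching a Rel-normal element
   and then continued constantly *)
Definition maximal_seq (Rel : mdist -> mdist -> Prop) (m : mdist) (s : nat -> mdist) : Prop :=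
  s O = m /\
  forall n, Rel (s n) (s (S n)) \/ (rel_normal Rel (s n) /\ s (S n) = s n).

Definition is_sup_fun (f : nat -> term -> R) (mu : term -> R) : Prop :=
  (forall n N, f n N <= mu N) /\
  (forall nu : term -> R, (forall n N, f n N <= nu N) -> forall N, mu N <= nu N).

Definition Lim_obs (m : mdist) (Rel : mdist -> mdist -> Prop) (mu : term -> R) : Prop :=
  exists s, maximal_seq Rel m s /\ is_sup_fun (fun n => obs (s n)) mu.

(* Main.v *)
Require Import Defs.
From Stdlib Require Import Reals List.
From Stdlib Require Import Lra Permutation Lia Classical ClassicalDescription FunctionalExtensionality.
From Stdlib Require ClassicalEpsilon.
Import ListNotations.
Open Scope R_scope.


Lemma bw_not_value V M : is_value V -> ~ beta_weak V M.
Proof. destruct V; simpl; try tauto; intros _ H; inversion H. Qed.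
Lemma os_not_value V L R : is_value V -> ~ oplus_step V L R.
Proof. destruct V; simpl; try tauto; intros _ H; inversion H. Qed.
Lemma bw_not_choice P Q M : ~ beta_weak (Choice P Q) M.
Proof. intro H; inversion H. Qed.

Ltac kill := exfalso; match goal with
  | H : beta_weak (Lam _) _ |- _ => inversion H
  | H : beta_weak (Var _) _ |- _ => inversion H
  | H : beta_weak (Choice _ _) _ |- _ => inversion H
  | H : oplus_step (Lam _) _ _ |- _ => inversion H
  | H : oplus_step (Var _) _ _ |- _ => inversion H
  | H : is_value ?V, H' : beta_weak ?V _ |- _ => exact (bw_not_value _ _ H H')
  | H : is_value ?V, H' : oplus_step ?V _ _ |- _ => exact (os_not_value _ _ _ H H')
  end.

Lemma bw_diamond M M1 M2 : beta_weak M M1 -> beta_weak M M2 ->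
  M1 = M2 \/ exists M3, beta_weak M1 M3 /\ beta_weak M2 M3.
Proof.
  intros H1; revert M2; induction H1; intros M2 H2; inversion H2; subst;
    try (left; reflexivity); try kill.
  - destruct (IHbeta_weak _ H4) as [->|[M3 [A B]]]; [left; reflexivity|].
    right; exists (App M3 N); split; constructor; auto.
  - right; exists (App M' N'); split; constructor; auto.
  - right; exists (App M' N'); split; constructor; auto.
  - destruct (IHbeta_weak _ H4) as [->|[M3 [A B]]]; [left; reflexivity|].
    right; exists (App M M3); split; constructor; auto.
Qed.

Lemma bw_os M M' L R : beta_weak M M' -> oplus_step M L R ->
  exists L' R', beta_weak L L' /\ beta_weak R R' /\ oplus_step M' L' R'.
Proof.
  intros Hb Ho; revert M' Hb; induction Ho; intros M' Hb; inversion Hb; subst; try kill.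
  - match goal with H : beta_weak T _ |- _ => destruct (IHHo _ H) as [L' [R' [A [B C]]]] end.
    exists (App L' N), (App R' N); repeat split; constructor; auto.
  - do 2 eexists; repeat split; [constructor; eassumption|constructor; eassumption|]. constructor; eassumption.
  - do 2 eexists; repeat split; [constructor; eassumption|constructor; eassumption|]. constructor; eassumption.
  - match goal with H : beta_weak T _ |- _ => destruct (IHHo _ H) as [L' [R' [A [B C]]]] end.
    exists (App M L'), (App M R'); repeat split; constructor; auto.
Qed.

Lemma os_diamond M L R L' R' : oplus_step M L R -> oplus_step M L' R' ->
  (L = L' /\ R = R') \/ exists A B C D, oplus_step L A B /\ oplus_step R C D /\
     oplus_step L' A C /\ oplus_step R' B D.
Proof.
  intros H1; revert L' R'; induction H1; intros L' R' H2; inversion H2; subst; try kill.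
  - left; auto.
  - destruct (IHoplus_step _ _ H5) as [[-> ->]|[A [B [C [D [h1 [h2 [h3 h4]]]]]]]];
      [left; auto|].
    right; exists (App A N), (App B N), (App C N), (App D N); repeat split; constructor; auto.
  - right; exists (App L L0), (App L R3), (App R2 L0), (App R2 R3); repeat split; constructor; auto.
  - right; do 4 eexists; repeat split; constructor; eauto.
  - destruct (IHoplus_step _ _ H5) as [[-> ->]|[A [B [C [D [h1 [h2 [h3 h4]]]]]]]];
      [left; auto|].
    right; exists (App M A), (App M B), (App M C), (App M D); repeat split; constructor; auto.
Qed.

Definition kind (M : term) : nat :=
  match M with Var _ => 0 | Lam _ => 1 | App _ _ => 2 | Choice _ _ => 3 end%nat.

Lemma wn_lam P : weak_normal (Lam P).
Proof. intros [M' H]; inversion H. Qed.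
Lemma wn_choice P Q : weak_normal (Choice P Q).
Proof. intros [M' H]; inversion H. Qed.
Lemma wn_var n : weak_normal (Var n).
Proof. intros [M' H]; inversion H. Qed.

Lemma wn_app P Q : weak_normal (App P Q) <->
  weak_normal P /\ weak_normal Q /\ ~ (kind P = 1%nat /\ is_value Q).
Proof.
  split.
  - intros H; repeat split.
    + intros [P' HP]; apply H; eexists; apply bw_appl; eauto.
    + intros [Q' HQ]; apply H; eexists; apply bw_appr; eauto.
    + intros [HP HQ]; destruct P; simpl in HP; try discriminate.
      apply H; eexists; apply bw_redex; auto.
  - intros [HP [HQ HK]] [M' H]; inversion H; subst.
    + apply HK; simpl; auto.
    + apply HP; eauto.
    + apply HQ; eauto.
Qed.

Lemma wn_stepU M M' : weak_normal M -> stepU M M' -> weak_normal M' /\ kind M' = kind M.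
Proof.
  intros Hw H; induction H.
  - exfalso; apply Hw; eauto.
  - split; [apply wn_lam| reflexivity].
  - apply wn_app in H as [HP [HQ HK]].
    destruct (IHstepU HP) as [HP' Hk]. split; [|reflexivity].
    apply wn_app; repeat split; auto. rewrite Hk; auto.
  - apply wn_app in H as [HP [HQ HK]].
    destruct (IHstepU HQ) as [HQ' Hk]. split; [|reflexivity].
    apply wn_app; repeat split; auto.
    intros [A B]; apply HK; split; auto.
    destruct Q, Q'; simpl in *; try discriminate; auto.
  - split; [apply wn_choice|reflexivity].
  - split; [apply wn_choice|reflexivity].
Qed.

Lemma stepU_diamond M M1 M2 : stepU M M1 -> stepU M M2 ->
  M1 = M2 \/ exists M3, stepU M1 M3 /\ stepU M2 M3.
Proof.
  intros H1; revert M2; induction H1; intros M2 H2; inversion H2; subst;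
    try (exfalso; match goal with H : weak_normal ?X, H' : beta_weak ?X _ |- _ => apply H; eauto end).
  - destruct (bw_diamond _ _ _ H H0) as [->|[M3 [A B]]]; [left; auto|].
    right; exists M3; split; apply su_weak; auto.
  - destruct (IHstepU _ H4) as [->|[M3 [A B]]]; [left; auto|].
    right; exists (Lam M3); split; apply su_lam; auto using wn_lam.
  - destruct (IHstepU _ H6) as [->|[M3 [A B]]]; [left; auto|].
    right; exists (App M3 Q); split; apply su_appl; auto.
    + apply (wn_stepU _ _ H (su_appl _ _ _ H H1)).
    + apply (wn_stepU _ _ H (su_appl _ _ _ H H6)).
  - right; exists (App P' Q'); split.
    + apply su_appr; auto. apply (wn_stepU _ _ H (su_appl _ _ _ H H1)).
    + apply su_appl; auto. apply (wn_stepU _ _ H (su_appr _ _ _ H H6)).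
  - right; exists (App P' Q'); split.
    + apply su_appl; auto. apply (wn_stepU _ _ H (su_appr _ _ _ H H1)).
    + apply su_appr; auto. apply (wn_stepU _ _ H (su_appl _ _ _ H H6)).
  - destruct (IHstepU _ H6) as [->|[M3 [A B]]]; [left; auto|].
    right; exists (App P M3); split; apply su_appr; auto.
    + apply (wn_stepU _ _ H (su_appr _ _ _ H H1)).
    + apply (wn_stepU _ _ H (su_appr _ _ _ H H6)).
  - destruct (IHstepU _ H6) as [->|[M3 [A B]]]; [left; auto|].
    right; exists (Choice M3 Q); split; apply su_chl; auto using wn_choice.
  - right; exists (Choice P' Q'); split.
    + apply su_chr; auto using wn_choice.
    + apply su_chl; auto using wn_choice.
  - right; exists (Choice P' Q'); split.
    + apply su_chl; auto using wn_choice.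
    + apply su_chr; auto using wn_choice.
  - destruct (IHstepU _ H6) as [->|[M3 [A B]]]; [left; auto|].
    right; exists (Choice P M3); split; apply su_chr; auto using wn_choice.
Qed.

Definition no_os M := ~ exists L R, oplus_step M L R.

Lemma sn_iff M : surface_normal M <-> weak_normal M /\ no_os M.
Proof.
  split.
  - intros H; split.
    + intros [M' HM]; apply H; eexists; apply ss_beta; eauto.
    + intros [L [R0 HM]]; apply H; eexists; apply ss_oplus; eauto.
  - intros [H1 H2] [m Hm]; inversion Hm; subst.
    + apply H1; eauto.
    + apply H2; eauto.
Qed.

Lemma sn_stepU M M' : surface_normal M -> stepU M M' -> surface_normal M'.
Proof.
  intros Hs H; apply sn_iff in Hs as [Hw Ho].
  apply sn_iff; split; [apply (wn_stepU _ _ Hw H)|].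
  revert Hw Ho; induction H; intros Hw Ho.
  - exfalso; apply Hw; eauto.
  - intros [L [R0 HH]]; inversion HH.
  - intros [L [R0 HH]]; inversion HH; subst.
    + apply wn_app in Hw as [HP _].
      refine (IHstepU HP _ _). * intros [a [b Hab]]; apply Ho; do 2 eexists; apply os_appl; eauto.
      * eauto.
    + apply Ho; do 2 eexists; apply os_appr; eauto.
  - intros [L [R0 HH]]; inversion HH; subst.
    + apply Ho; do 2 eexists; apply os_appl; eauto.
    + apply wn_app in Hw as [_ [HQ _]].
      refine (IHstepU HQ _ _). * intros [a [b Hab]]; apply Ho; do 2 eexists; apply os_appr; eauto.
      * eauto.
  - exfalso; apply Ho; do 2 eexists; apply os_redex.
  - exfalso; apply Ho; do 2 eexists; apply os_redex.
Qed.

Lemma bw_bf M M' : beta_weak M M' -> beta_full M M'.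
Proof. induction 1; constructor; auto. Qed.

Lemma stepU_bf M M' : stepU M M' -> beta_full M M'.
Proof. induction 1; try constructor; auto using bw_bf. Qed.

Lemma bf_stepU M M' : beta_full M M' -> exists M'', stepU M M''.
Proof.
  induction 1.
  - eexists; apply su_weak; apply bw_redex; auto.
  - destruct (classic (weak_normal (App M N))) as [Hw|Hw].
    + destruct IHbeta_full as [X HX]; eexists; apply su_appl; eauto.
    + apply NNPP in Hw as [X HX]; eexists; apply su_weak; eauto.
  - destruct (classic (weak_normal (App M N))) as [Hw|Hw].
    + destruct IHbeta_full as [X HX]; eexists; apply su_appr; eauto.
    + apply NNPP in Hw as [X HX]; eexists; apply su_weak; eauto.
  - destruct IHbeta_full as [X HX]; eexists; apply su_lam; eauto using wn_lam.
  - destruct IHbeta_full as [X HX]; eexists; apply su_chl; eauto using wn_choice.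
  - destruct IHbeta_full as [X HX]; eexists; apply su_chr; eauto using wn_choice.
Qed.

Lemma sstep_step M m : sstep M m -> step M m.
Proof. destruct 1; [apply st_beta; apply bw_bf; auto | apply st_oplus; auto]. Qed.

Lemma stepE_not_normal M m : stepE M m -> ~ normal M.
Proof.
  destruct 1; intro Hn; apply Hn.
  - exists m; apply sstep_step; auto.
  - eexists; apply st_beta; apply stepU_bf; eauto.
Qed.

Lemma stepE_total M : normal M \/ exists m, stepE M m.
Proof.
  destruct (classic (normal M)) as [H|H]; [left; auto|right].
  destruct (classic (surface_normal M)) as [Hs|Hs].
  - apply NNPP in H as [m Hm]; destruct Hm.
    + destruct (bf_stepU _ _ H) as [X HX]; eexists; apply se_U; eauto.
    + exfalso; apply Hs; eexists; apply ss_oplus; eauto.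
  - pose proof Hs as Hs'; apply NNPP in Hs as [m Hm]; exists m; apply se_surf; auto.
Qed.

Definition base M m := (normal M /\ m = unit_md M) \/ stepE M m.

Inductive LE : mdist -> mdist -> Prop :=
| LE_nil : LE [] []
| LE_cons p M m l n : base M m -> LE l n -> LE ((p,M)::l) (scale p m ++ n).

Lemma sstep_stepE M m : sstep M m -> stepE M m.
Proof. intro H; apply se_surf; auto. intro Hs; apply Hs; eauto. Qed.

Lemma LE1 p M m : stepE M m -> LE [(p,M)] (scale p m).
Proof. intro H; rewrite <- (app_nil_r (scale p m)); constructor; [right; auto|constructor]. Qed.

Lemma LE2 p q A B a b : stepE A a -> stepE B b -> LE [(p,A);(q,B)] (scale p a ++ scale q b).
Proof. intros H1 H2; rewrite <- (app_nil_r (scale q b)); constructor; [right; auto|constructor; [right; auto|constructor]]. Qed.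

Definition all_nn (m : mdist) := forall pM, In pM m -> ~ normal (snd pM).

Lemma TD M m1 m2 : stepE M m1 -> stepE M m2 ->
  m1 = m2 \/ (all_nn m1 /\ all_nn m2 /\
     exists n1 n2, LE m1 n1 /\ LE m2 n2 /\ Permutation n1 n2).
Proof.
  intros H1 H2.
  destruct H1 as [M m1 Hs1 S1|M M1 Hs1 U1];
  destruct H2 as [M m2 Hs2 S2|M M2 Hs2 U2]; try contradiction.
  - destruct S1 as [M M1 B1|M L1 R1 O1]; destruct S2 as [M M2 B2|M L2 R2 O2].
    + destruct (bw_diamond _ _ _ B1 B2) as [->|[M3 [C1 C2]]]; [left; auto|right].
      assert (E1 : stepE M1 (unit_md M3)) by (apply sstep_stepE; constructor; auto).
      assert (E2 : stepE M2 (unit_md M3)) by (apply sstep_stepE; constructor; auto).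
      repeat split.
      * intros pM [<-|[]]; exact (stepE_not_normal _ _ E1).
      * intros pM [<-|[]]; exact (stepE_not_normal _ _ E2).
      * exists (scale 1 (unit_md M3)), (scale 1 (unit_md M3)); repeat split; try apply LE1; try apply Permutation_refl; auto.
    + destruct (bw_os _ _ _ _ B1 O2) as [L' [R' [C1 [C2 C3]]]]; right.
      assert (E1 : stepE M1 (oplus_md L' R')) by (apply sstep_stepE; constructor; auto).
      assert (E2 : stepE L2 (unit_md L')) by (apply sstep_stepE; constructor; auto).
      assert (E3 : stepE R2 (unit_md R')) by (apply sstep_stepE; constructor; auto).
      repeat split.
      * intros pM [<-|[]]; exact (stepE_not_normal _ _ E1).
      * intros pM [<-|[<-|[]]]; [exact (stepE_not_normal _ _ E2)|exact (stepE_not_normal _ _ E3)].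
      * exists (scale 1 (oplus_md L' R')), (scale (1/2) (unit_md L') ++ scale (1/2) (unit_md R')).
        repeat split; try apply LE1; try apply LE2; auto.
        replace (scale 1 (oplus_md L' R')) with (scale (1/2) (unit_md L') ++ scale (1/2) (unit_md R')).
        apply Permutation_refl.
        unfold scale, oplus_md, unit_md; simpl; f_equal; [f_equal; ring|f_equal; f_equal; ring].
    + destruct (bw_os _ _ _ _ B2 O1) as [L' [R' [C1 [C2 C3]]]]; right.
      assert (E1 : stepE M2 (oplus_md L' R')) by (apply sstep_stepE; constructor; auto).
      assert (E2 : stepE L1 (unit_md L')) by (apply sstep_stepE; constructor; auto).
      assert (E3 : stepE R1 (unit_md R')) by (apply sstep_stepE; constructor; auto).
      repeat split.
      * intros pM [<-|[<-|[]]]; [exact (stepE_not_normal _ _ E2)|exact (stepE_not_normal _ _ E3)].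
      * intros pM [<-|[]]; exact (stepE_not_normal _ _ E1).
      * exists (scale (1/2) (unit_md L') ++ scale (1/2) (unit_md R')), (scale 1 (oplus_md L' R')).
        repeat split; try apply LE1; try apply LE2; auto.
        replace (scale 1 (oplus_md L' R')) with (scale (1/2) (unit_md L') ++ scale (1/2) (unit_md R')).
        apply Permutation_refl.
        unfold scale, oplus_md, unit_md; simpl; f_equal; [f_equal; ring|f_equal; f_equal; ring].
    + destruct (os_diamond _ _ _ _ _ O1 O2) as [[-> ->]|[A [B [C [D [h1 [h2 [h3 h4]]]]]]]];
        [left; auto|right].
      assert (E1 : stepE L1 (oplus_md A B)) by (apply sstep_stepE; constructor; auto).
      assert (E2 : stepE R1 (oplus_md C D)) by (apply sstep_stepE; constructor; auto).
      assert (E3 : stepE L2 (oplus_md A C)) by (apply sstep_stepE; constructor; auto).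
      assert (E4 : stepE R2 (oplus_md B D)) by (apply sstep_stepE; constructor; auto).
      repeat split.
      * intros pM [<-|[<-|[]]]; [exact (stepE_not_normal _ _ E1)|exact (stepE_not_normal _ _ E2)].
      * intros pM [<-|[<-|[]]]; [exact (stepE_not_normal _ _ E3)|exact (stepE_not_normal _ _ E4)].
      * exists (scale (1/2) (oplus_md A B) ++ scale (1/2) (oplus_md C D)),
               (scale (1/2) (oplus_md A C) ++ scale (1/2) (oplus_md B D)).
        repeat split; try apply LE2; auto.
        unfold scale, oplus_md; simpl. apply perm_skip, perm_swap.
  - destruct (stepU_diamond _ _ _ U1 U2) as [->|[M3 [C1 C2]]]; [left; auto|right].
    assert (E1 : stepE M1 (unit_md M3)) by (apply se_U; eauto using sn_stepU).
    assert (E2 : stepE M2 (unit_md M3)) by (apply se_U; eauto using sn_stepU).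
    repeat split.
    * intros pM [<-|[]]; exact (stepE_not_normal _ _ E1).
    * intros pM [<-|[]]; exact (stepE_not_normal _ _ E2).
    * exists (scale 1 (unit_md M3)), (scale 1 (unit_md M3)); repeat split; try apply LE1; try apply Permutation_refl; auto.
Qed.

Definition osum (m : mdist) (N : term) : R :=
  fold_right (fun pM acc => (if term_eq_dec (snd pM) N then fst pM else 0) + acc) 0 m.

Lemma obs_osum m N : obs m N = if excluded_middle_informative (normal N) then osum m N else 0.
Proof. reflexivity. Qed.

Lemma osum_app a b N : osum (a ++ b) N = osum a N + osum b N.
Proof. induction a as [|x a IH]; simpl; [ring|rewrite IH; ring]. Qed.

Lemma osum_scale p a N : osum (scale p a) N = p * osum a N.
Proof.
  induction a as [|[q M] a IH]; simpl; [ring|rewrite IH].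
  destruct (term_eq_dec M N); ring.
Qed.

Lemma osum_perm a b N : Permutation a b -> osum a N = osum b N.
Proof. induction 1; simpl; try ring; congruence. Qed.

Lemma osum_nn m N : normal N -> all_nn m -> osum m N = 0.
Proof.
  intros HN; induction m as [|[q M] m IH]; intros H; simpl; [ring|].
  rewrite IH; [|intros pM Hp; apply H; right; auto].
  destruct (term_eq_dec M N) as [->|]; [|ring].
  exfalso; apply (H (q,N)); [left; auto|exact HN].
Qed.

Lemma obs_app a b N : obs (a ++ b) N = obs a N + obs b N.
Proof. rewrite !obs_osum; destruct excluded_middle_informative; [apply osum_app|ring]. Qed.
Lemma obs_scale p a N : obs (scale p a) N = p * obs a N.
Proof. rewrite !obs_osum; destruct excluded_middle_informative; [apply osum_scale|ring]. Qed.
Lemma obs_perm a b N : Permutation a b -> obs a N = obs b N.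
Proof. intro H; rewrite !obs_osum; destruct excluded_middle_informative; [apply osum_perm; auto|ring]. Qed.
Lemma obs_nn m N : all_nn m -> obs m N = 0.
Proof. intro H; rewrite !obs_osum; destruct excluded_middle_informative; [apply osum_nn; auto|ring]. Qed.

Lemma scale_app p a b : scale p (a ++ b) = scale p a ++ scale p b.
Proof. apply map_app. Qed.
Lemma scale_scale p q m : scale p (scale q m) = scale (p*q) m.
Proof. induction m as [|[r M] m IH]; simpl; auto; rewrite IH; f_equal; f_equal; ring. Qed.
Lemma scale_1 m : scale 1 m = m.
Proof. induction m as [|[r M] m IH]; simpl; auto; rewrite IH; f_equal; f_equal; ring. Qed.

Lemma LE_app a a' b b' : LE a a' -> LE b b' -> LE (a ++ b) (a' ++ b').
Proof. induction 1; intro Hb; simpl; auto. rewrite <- app_assoc; constructor; auto. Qed.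

Lemma LE_scale p a b : LE a b -> LE (scale p a) (scale p b).
Proof.
  induction 1; simpl; [constructor|].
  rewrite scale_app, scale_scale; constructor; auto.
Qed.

Lemma LE_inv p M l x : LE ((p,M)::l) x -> exists m n, base M m /\ LE l n /\ x = scale p m ++ n.
Proof. intro H; inversion H; subst; eauto. Qed.

Lemma LE_perm l l' n : Permutation l l' -> LE l n -> exists n', LE l' n' /\ Permutation n n'.
Proof.
  intros HP; revert n; induction HP; intros n H.
  - exists n; split; auto.
  - destruct x as [p M]; apply LE_inv in H as [m [n0 [B [H ->]]]].
    destruct (IHHP _ H) as [n' [H1 H2]]; exists (scale p m ++ n'); split.
    + constructor; auto.
    + apply Permutation_app_head; auto.
  - destruct x as [p M]; destruct y as [q K].
    apply LE_inv in H as [m [n0 [B [H ->]]]].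
    apply LE_inv in H as [m' [n1 [B' [H ->]]]].
    exists (scale p m' ++ (scale q m ++ n1)); split.
    + constructor; auto; constructor; auto.
    + rewrite !app_assoc; apply Permutation_app_tail, Permutation_app_comm.
  - destruct (IHHP1 _ H) as [n1 [H1 H2]]; destruct (IHHP2 _ H1) as [n2 [H3 H4]].
    exists n2; split; auto; eapply Permutation_trans; eauto.
Qed.

Lemma base_total M : exists m, base M m.
Proof.
  destruct (stepE_total M) as [H|[m H]]; [exists (unit_md M); left; auto|exists m; right; auto].
Qed.

Lemma LE_total l : exists n, LE l n.
Proof.
  induction l as [|[p M] l [n IH]]; [exists []; constructor|].
  destruct (base_total M) as [m Hm]; exists (scale p m ++ n); constructor; auto.
Qed.

Lemma base_diamond M a1 a2 : base M a1 -> base M a2 ->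
  (forall N, obs a1 N = obs a2 N) /\
  exists b1 b2, LE a1 b1 /\ LE a2 b2 /\ Permutation b1 b2.
Proof.
  intros H1 H2.
  assert (Heq : a1 = a2 -> (forall N, obs a1 N = obs a2 N) /\
    exists b1 b2, LE a1 b1 /\ LE a2 b2 /\ Permutation b1 b2).
  { intros <-; split; auto. destruct (LE_total a1) as [b Hb]; exists b, b; auto. }
  destruct H1 as [[Hn ->]|E1].
  - destruct H2 as [[_ ->]|E2]; [apply Heq; auto|].
    exfalso; exact (stepE_not_normal _ _ E2 Hn).
  - destruct H2 as [[Hn _]|E2]; [exfalso; exact (stepE_not_normal _ _ E1 Hn)|].
    destruct (TD _ _ _ E1 E2) as [He|[N1 [N2 J]]]; [apply Heq; auto|].
    split; auto. intro N; rewrite !obs_nn; auto.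
Qed.

Lemma LE_diamond l m1 m2 : LE l m1 -> LE l m2 ->
  (forall N, obs m1 N = obs m2 N) /\
  exists n1 n2, LE m1 n1 /\ LE m2 n2 /\ Permutation n1 n2.
Proof.
  intros H1; revert m2; induction H1; intros m2 H2.
  - inversion H2; subst; split; auto; exists [], []; repeat constructor.
  - apply LE_inv in H2 as [m' [n' [B' [H' ->]]]].
    destruct (base_diamond _ _ _ H B') as [O [b1 [b2 [L1 [L2 P]]]]].
    destruct (IHLE _ H') as [O' [c1 [c2 [K1 [K2 Q]]]]].
    split.
    + intro N; rewrite !obs_app, !obs_scale, O, O'; ring.
    + exists (scale p b1 ++ c1), (scale p b2 ++ c2); repeat split.
      * apply LE_app; auto; apply LE_scale; auto.
      * apply LE_app; auto; apply LE_scale; auto.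
      * apply Permutation_app; auto. apply Permutation_map; auto.
Qed.

Lemma LE_unit_base M x : LE (unit_md M) x -> base M x.
Proof.
  unfold unit_md; intro H; apply LE_inv in H as [m [n [B [H ->]]]].
  inversion H; subst. rewrite app_nil_r, scale_1; auto.
Qed.

Lemma base_LE_unit M m : base M m -> LE (unit_md M) m.
Proof.
  intro B. assert (H : LE [(1,M)] (scale 1 m ++ [])) by (constructor; auto; constructor).
  rewrite app_nil_r, scale_1 in H; exact H.
Qed.

Lemma fullE_LE l n : fullE l n -> LE l n.
Proof.
  induction 1.
  - apply base_LE_unit; left; auto.
  - apply base_LE_unit; right; auto.
  - assert (Hb : forall i, (i < length l)%nat -> base (snd (nth i l (0, Var 0))) (nth i ms [])).
    { intros i Hi; apply LE_unit_base; auto. }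
    clear H0 H1. revert ms H Hb; induction l as [|[p M] l IHl]; intros ms Hl Hb.
    + destruct ms; simpl in *; try discriminate; constructor.
    + destruct ms as [|m ms]; simpl in *; try discriminate. constructor.
      * apply (Hb 0%nat); lia.
      * apply IHl; [lia|]. intros i Hi; apply (Hb (S i)); lia.
Qed.

Lemma base_fullE M m : base M m -> fullE (unit_md M) m.
Proof. intros [[Hn ->]|H]; [apply fe_normal; auto|apply fe_step; auto]. Qed.

Lemma LE_fullE l n : LE l n -> fullE l n.
Proof.
  intro H.
  assert (exists ms, length ms = length l /\
     (forall i, (i < length l)%nat -> base (snd (nth i l (0, Var 0))) (nth i ms [])) /\
     n = concat (map (fun pm => scale (fst (fst pm)) (snd pm)) (combine l ms))) as [ms [A [B ->]]].
  { induction H.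
    - exists []; repeat split; simpl; auto; intros; lia.
    - destruct IHLE as [ms [A [B ->]]]. exists (m :: ms); repeat split; simpl; auto.
      intros [|i] Hi; simpl; auto. apply B; simpl in Hi; lia. }
  apply fe_lift; auto. intros i Hi; apply base_fullE; auto.
Qed.

Definition amass (m : mdist) : R := fold_right (fun pM acc => Rabs (fst pM) + acc) 0 m.

Lemma amass_app a b : amass (a ++ b) = amass a + amass b.
Proof. induction a; simpl; [ring|rewrite IHa; ring]. Qed.
Lemma amass_scale p a : amass (scale p a) = Rabs p * amass a.
Proof. induction a as [|[q M] a IH]; simpl; [ring|rewrite IH, Rabs_mult; ring]. Qed.

Lemma amass_base M m : base M m -> amass m = 1.
Proof.
  assert (H1 : Rabs 1 + 0 = 1) by (rewrite Rabs_R1; ring).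
  assert (H2 : Rabs (1/2) + (Rabs (1/2) + 0) = 1) by (rewrite Rabs_pos_eq; lra).
  intros [[_ ->]|H]; [exact H1|].
  destruct H as [M m _ S|M M' _ U]; [destruct S|]; [exact H1|exact H2|exact H1].
Qed.

Lemma amass_LE l n : LE l n -> amass n = amass l.
Proof.
  induction 1; simpl; auto. rewrite amass_app, amass_scale, IHLE, (amass_base _ _ H); ring.
Qed.

Lemma obs_le_amass m N : obs m N <= amass m.
Proof.
  assert (Hp : forall m, 0 <= amass m).
  { induction m0; simpl; [lra|]. pose proof (Rabs_pos (fst a)); lra. }
  rewrite obs_osum; destruct excluded_middle_informative; [|apply Hp].
  induction m as [|[q M] m IH]; simpl; [lra|].
  destruct (term_eq_dec M N); pose proof (Rle_abs q); pose proof (Rabs_pos q); lra.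
Qed.

Definition next (l : mdist) : mdist :=
  proj1_sig (ClassicalEpsilon.constructive_indefinite_description _ (LE_total l)).
Lemma next_LE l : LE l (next l).
Proof. unfold next; destruct ClassicalEpsilon.constructive_indefinite_description; auto. Qed.

Fixpoint seqf (a : mdist) (k : nat) : mdist :=
  match k with O => a | S k => next (seqf a k) end.

Lemma seqf_LE a k : LE (seqf a k) (seqf a (S k)).
Proof. apply next_LE. Qed.

Definition Q (n : nat) := forall s t : nat -> mdist,
  (forall k, LE (s k) (s (S k))) -> (forall k, LE (t k) (t (S k))) ->
  Permutation (s O) (t O) -> forall N, obs (s n) N = obs (t n) N.

Lemma RD : forall n, Q n.
Proof.
  assert (forall n j, (j <= n)%nat -> Q j); [|intro n; apply (H n n); lia].
  induction n as [|n IH]; intros j Hj.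
  - assert (j = O) as -> by lia. intros s t _ _ P N; apply obs_perm; auto.
  - destruct j as [|j]; [apply (IH O); lia|].
    assert (IHj : forall i, (i <= j)%nat -> Q i) by (intros; apply IH; lia).
    intros s t Hs Ht P N.
    destruct (LE_perm _ _ _ (Permutation_sym P) (Ht O)) as [t1' [Lt1' Pt]].
    destruct (LE_diamond _ _ _ (Hs O) Lt1') as [O1 [a [b [La [Lb Pab]]]]].
    pose (B := fun k => match k with O => s 1%nat | S k => seqf a k end).
    pose (C := fun k => match k with O => t1' | S k => seqf b k end).
    assert (HB : forall k, LE (B k) (B (S k))) by (intros [|k]; simpl; [exact La|apply seqf_LE]).
    assert (HC : forall k, LE (C k) (C (S k))) by (intros [|k]; simpl; [exact Lb|apply seqf_LE]).
    assert (E1 : obs (s (S j)) N = obs (B j) N).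
    { apply (IHj j (le_n _) (fun k => s (S k)) B); auto. }
    assert (E2 : obs (B j) N = obs (C j) N).
    { destruct j as [|j']; simpl; [apply O1|].
      apply (IHj j' ltac:(lia) (seqf a) (seqf b)); auto using seqf_LE. }
    assert (E3 : obs (C j) N = obs (t (S j)) N).
    { apply (IHj j (le_n _) C (fun k => t (S k))); auto. simpl; apply Permutation_sym; auto. }
    congruence.
Qed.

Lemma maximal_LE m s : maximal_seq fullE m s -> s O = m /\ forall k, LE (s k) (s (S k)).
Proof.
  intros [H0 H]; split; auto; intro k.
  destruct (H k) as [F|[Rn _]]; [apply fullE_LE; auto|].
  exfalso; apply Rn; destruct (LE_total (s k)) as [n Hn]; exists n; apply LE_fullE; auto.
Qed.

Lemma Lim_unique m mu1 mu2 : Lim_obs m fullE mu1 -> Lim_obs m fullE mu2 -> mu1 = mu2.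
Proof.
  intros [s [Ms [U1 L1]]] [t [Mt [U2 L2]]].
  apply maximal_LE in Ms as [s0 Hs]; apply maximal_LE in Mt as [t0 Ht].
  assert (E : forall n N, obs (s n) N = obs (t n) N).
  { intros n N; apply (RD n s t Hs Ht); rewrite s0, t0; apply Permutation_refl. }
  apply functional_extensionality; intro N; apply Rle_antisym.
  - apply L1; intros n N'; rewrite E; apply U2.
  - apply L2; intros n N'; rewrite <- E; apply U1.
Qed.

Theorem mainTheorem10 :
  forall m : mdist, valid_mdist m -> exists! mu : term -> R, Lim_obs m fullE mu.
Proof.
  intros m _.
  set (s := seqf m).
  assert (Ms : maximal_seq fullE m s).
  { split; [reflexivity|]. intro n; left; apply LE_fullE, seqf_LE. }
  assert (Am : forall n, amass (s n) = amass m).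
  { induction n; [reflexivity|]. unfold s in *. rewrite (amass_LE _ _ (seqf_LE m n)); auto. }
  assert (Hc : forall N, {x | is_lub (fun x => exists n, x = obs (s n) N) x}).
  { intro N; apply completeness.
    - exists (amass m); intros x [n ->]; rewrite <- (Am n); apply obs_le_amass.
    - exists (obs (s O) N); exists O; auto. }
  exists (fun N => proj1_sig (Hc N)); split.
  - exists s; split; auto; split.
    + intros n N; apply (proj1 (proj2_sig (Hc N))); exists n; auto.
    + intros nu Hnu N; apply (proj2 (proj2_sig (Hc N))).
      intros y [n ->]; apply Hnu.
  - intros mu' H'; apply Lim_unique with m; auto.
    exists s; split; auto; split.
    + intros n N; apply (proj1 (proj2_sig (Hc N))); exists n; auto.
    + intros nu Hnu N; apply (proj2 (proj2_sig (Hc N))).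
      intros y [n ->]; apply Hnu.
Qed.
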